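(* Let $n\ge 1$ and let $s,t$ be nonnegative integers. Two players independently each open one cereal box per time step; each box contains one of $n$ coupon types, chosen uniformly at random and independently of everything else. The first player is currently missing $s$ of the $n$ coupon types and the second player is missing $t$ of them. Let $X_1(s)$ and $X_2(t)$ be the number of boxes the first, respectively second, player must open until they have all $n$ coupon types, and let $$M(s,t):=\mathbb{E}\left[\max\{X_1(s),X_2(t)\}\right].$$ Equivalently, $M$ is determined by $M(0,0)=0$, $M(s,t)=0$ if $s<0$ or $t<0$, and the recurrence $$M(s,t)=\tfrac{s}{n}\left(1-\tfrac{t}{n}\right)M(s-1,t)+\left(1-\tfrac{s}{n}\right)\tfrac{t}{n}M(s,t-1)+\tfrac{s}{n}\cdot\tfrac{t}{n}M(s-1,t-1)+\left(1-\tfrac{s}{n}\right)\left(1-\tfrac{t}{n}\right)M(s,t)+1.$$ Then $$M(s,t)=nH(s+t)-\frac{\left(H(s+t)-1\right)st}{(s+t)(s+t-1)}+o(1).$$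
   Context: $H(m)=\sum_{j=1}^m \frac1j$ denotes the $m$-th harmonic number. The term $o(1)$ denotes a quantity tending to $0$ as $n\to\infty$ with $s,t$ fixed. *)

(* Defs.v *)
From Stdlib Require Import Reals.
From Coquelicot Require Import Coquelicot.
Open Scope R_scope.

Fixpoint H (m : nat) : R :=
  match m with
  | O => 0
  | S k => H k + / INR (S k)
  end.

(* Terms with s-1 (resp. t-1) only appear multiplied by
   s/n (resp. t/n), so the convention M(s,t)=0 for negative indices is
   irrelevant (truncated nat subtraction is harmless). *)
Definition coupon_rec (M : nat -> nat -> nat -> R) : Prop :=
  (forall n : nat, (1 <= n)%nat -> M n 0%nat 0%nat = 0) /\
  (forall n s t : nat, (1 <= n)%nat -> (s <= n)%nat -> (t <= n)%nat ->
     (s + t <> 0)%nat ->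
     let p := INR s / INR n in
     let q := INR t / INR n in
     M n s t =
       p * (1 - q) * M n (s - 1)%nat t
     + (1 - p) * q * M n s (t - 1)%nat
     + p * q * M n (s - 1)%nat (t - 1)%nat
     + (1 - p) * (1 - q) * M n s t + 1).

(* Main term n H(s+t) - (H(s+t)-1) s t / ((s+t)(s+t-1)).
   When s+t <= 1 we have s t = 0 and the correction term is 0. *)
Definition approx (n s t : nat) : R :=
  INR n * H (s + t) -
  (H (s + t) - 1) * INR s * INR t / (INR (s + t) * (INR (s + t) - 1)).

(* Main.v *)
Require Import Defs.
From Stdlib Require Import Reals Lra Lia Arith.
From Coquelicot Require Import Coquelicot.
Open Scope R_scope.

Definition aa (s t : nat) : R := H (s + t).
Definition bb (s t : nat) : R :=
  - ((H (s + t) - 1) * INR s * INR t / (INR (s + t) * (INR (s + t) - 1))).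

Lemma approx_eq n s t : approx n s t = INR n * aa s t + bb s t.
Proof. unfold approx, aa, bb. ring. Qed.

Lemma H_S k : H (S k) = H k + / INR (S k).
Proof. reflexivity. Qed.

Lemma INR_S_pos k : 0 < INR (S k).
Proof. apply lt_0_INR; lia. Qed.

Lemma sA s t m : (s + t = S m)%nat -> INR s * aa (s - 1) t = INR s * H m.
Proof.
  intros Hm. destruct s. simpl. ring.
  unfold aa. f_equal. f_equal. lia.
Qed.

Lemma tB s t m : (s + t = S m)%nat -> INR t * aa s (t - 1) = INR t * H m.
Proof.
  intros Hm. destruct t. simpl. ring.
  unfold aa. f_equal. f_equal. lia.
Qed.

Lemma Ha s t : (s + t <> 0)%nat ->
  aa s t * (INR s + INR t) = INR s * aa (s - 1) t + INR t * aa s (t - 1) + 1.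
Proof.
  intros Hst. destruct (s + t)%nat as [|m] eqn:Hm; [lia|].
  rewrite (sA s t m Hm), (tB s t m Hm).
  unfold aa. rewrite Hm, H_S, <- Hm, plus_INR.
  pose proof (INR_S_pos m) as P. rewrite <- Hm, plus_INR in P.
  field. lra.
Qed.

Lemma Hb s t : (s + t <> 0)%nat ->
  bb s t * (INR s + INR t) - INR s * INR t * aa s t =
  INR s * bb (s - 1) t + INR t * bb s (t - 1)
  + INR s * INR t * (aa (s - 1) (t - 1) - aa (s - 1) t - aa s (t - 1)).
Proof.
  intros Hst. destruct s as [|s'].
  - unfold bb. simpl (INR 0). unfold Rdiv. ring.
  - destruct t as [|t'].
    + unfold bb. simpl (INR 0). unfold Rdiv. ring.
    + replace (S s' - 1)%nat with s' by lia.
      replace (S t' - 1)%nat with t' by lia.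
      unfold aa, bb.
      replace (S s' + S t')%nat with (S (S (s' + t'))) by lia.
      replace (s' + S t')%nat with (S (s' + t')) by lia.
      replace (S s' + t')%nat with (S (s' + t')) by lia.
      destruct (Nat.eq_dec (s' + t') 0) as [Hm|Hm].
      * assert (s' = 0%nat) by lia. assert (t' = 0%nat) by lia. subst.
        replace (0+0)%nat with 0%nat by reflexivity. rewrite !H_S, !S_INR. change (H 0) with 0. change (INR 0) with 0. unfold Rdiv. rewrite !Rmult_0_r, !Rmult_0_l. field.
      * rewrite !H_S.
        rewrite !S_INR, !plus_INR.
        assert (0 < INR s' + INR t').
        { rewrite <- plus_INR. apply lt_0_INR. lia. }
        assert (0 <= INR s') by apply pos_INR.
        assert (0 <= INR t') by apply pos_INR.
        field. repeat split; lra.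
Qed.

Lemma key (n s t M A B C a b aA aB aC bA bB bC : R) :
  0 < n -> 0 <= s <= n -> 0 <= t <= n -> 0 < s + t ->
  a * (s + t) = s * aA + t * aB + 1 ->
  b * (s + t) - s * t * a = s * bA + t * bB + s * t * (aC - aA - aB) ->
  M = s / n * (1 - t / n) * A + (1 - s / n) * (t / n) * B
      + s / n * (t / n) * C + (1 - s / n) * (1 - t / n) * M + 1 ->
  ((1 - t * / n) * (s * (A - (n * aA + bA)))
   + (1 - s * / n) * (t * (B - (n * aB + bB)))
   + (s * t * (C - (n * aC + bC))) * / n
   + (s * t * (bC - bA - bB) + b * (s * t)) * / n)
  * / ((s + t) - s * t * / n) = M - (n * a + b).
Proof.
  intros Hn Hs Ht Hst Ea Eb E.
  assert (h1 : s * t <= s * n) by (apply Rmult_le_compat_l; lra).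
  assert (h2 : s * t <= t * n) by (rewrite Rmult_comm; apply Rmult_le_compat_l; lra).
  assert (h3 : 0 < (s + t) * n) by (apply Rmult_lt_0_compat; lra).
  assert (Hd : 0 < s * n + t * n - s * t) by lra.
  set (r := (1 - s / n) * (1 - t / n)) in E.
  set (K := s / n * (1 - t / n) * A + (1 - s / n) * (t / n) * B
      + s / n * (t / n) * C + 1) in E.
  assert (E1 : M * (1 - r) = K) by (unfold K; lra).
  assert (E2 : 1 - r = (s * n + t * n - s * t) / (n * n)) by (unfold r; field; lra).
  rewrite E2 in E1.
  assert (HM : M = (s * (n - t) * A + (n - s) * t * B + s * t * C + n * n)
                   / (s * n + t * n - s * t)).
  { apply (Rmult_eq_reg_r ((s * n + t * n - s * t) / (n * n))).
    2: { apply Rgt_not_eq. unfold Rdiv. apply Rmult_lt_0_compat; [lra|].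
         apply Rinv_0_lt_compat. nra. }
    rewrite E1. unfold K. field. split; lra. }
  assert (Hb' : b = (s * bA + t * bB + s * t * (aC - aA - aB) + s * t * a) / (s + t)).
  { rewrite <- Eb. field. lra. }
  assert (Ha' : a = (s * aA + t * aB + 1) / (s + t)).
  { rewrite <- Ea. field. lra. }
  subst M. subst b. subst a.
  field. repeat split; try lra.
Qed.

Lemma lim_eq (u : nat -> R) (x y : R) : is_lim_seq u x -> x = y -> is_lim_seq u y.
Proof. intros L E. subst. exact L. Qed.

Lemma lim_inv_n : is_lim_seq (fun n => / INR n) 0.
Proof.
  pose proof (is_lim_seq_inv _ _ is_lim_seq_INR) as L. simpl in L.
  apply L. discriminate.
Qed.

Lemma L_mul0 (u v : nat -> R) (l : R) :
  is_lim_seq u l -> is_lim_seq v 0 -> is_lim_seq (fun n => u n * v n) 0.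
Proof. intros U V. eapply lim_eq. apply (is_lim_seq_mult' _ _ _ _ U V). ring. Qed.

Lemma L_mul0' (u v : nat -> R) (l : R) :
  is_lim_seq u 0 -> is_lim_seq v l -> is_lim_seq (fun n => u n * v n) 0.
Proof. intros U V. eapply lim_eq. apply (is_lim_seq_mult' _ _ _ _ U V). ring. Qed.

Lemma L_add0 (u v : nat -> R) :
  is_lim_seq u 0 -> is_lim_seq v 0 -> is_lim_seq (fun n => u n + v n) 0.
Proof. intros U V. eapply lim_eq. apply (is_lim_seq_plus' _ _ _ _ U V). ring. Qed.

Lemma L_scal0 (c : R) (u : nat -> R) :
  is_lim_seq u 0 -> is_lim_seq (fun n => c * u n) 0.
Proof. intros U. apply (L_mul0 (fun _ => c) u c); auto. apply is_lim_seq_const. Qed.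

Lemma L_cinv (c : R) : is_lim_seq (fun n => c * / INR n) 0.
Proof. apply L_scal0, lim_inv_n. Qed.

Lemma L_lin (x c : R) : is_lim_seq (fun n => x - c * / INR n) x.
Proof.
  eapply lim_eq. apply (is_lim_seq_minus' _ _ x 0). apply is_lim_seq_const.
  apply L_cinv. ring.
Qed.

Lemma L_d (x c : R) : x <> 0 -> is_lim_seq (fun n => / (x - c * / INR n)) (/ x).
Proof.
  intros Hx. pose proof (is_lim_seq_inv _ _ (L_lin x c)) as L. simpl in L.
  apply L. intro Z. apply Hx. injection Z. auto.
Qed.

Lemma main_ind (M : nat -> nat -> nat -> R) : coupon_rec M ->
  forall k s t, (s + t <= k)%nat ->
  is_lim_seq (fun n => M n s t - (INR n * aa s t + bb s t)) 0.
Proof.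
  intros HM. induction k as [|k IH]; intros s t Hst.
  - assert (s = 0%nat) by lia. assert (t = 0%nat) by lia. subst.
    apply is_lim_seq_ext_loc with (fun _ => 0); [|apply is_lim_seq_const].
    exists 1%nat. intros n Hn. rewrite (proj1 HM n Hn).
    unfold aa, bb. replace (0+0)%nat with 0%nat by reflexivity.
    change (H 0) with 0. change (INR 0) with 0. unfold Rdiv. ring.
  - destruct (le_lt_dec (s + t) k) as [Hle|Hlt]; [apply IH; exact Hle|].
    set (eA := fun n => INR s * (M n (s-1)%nat t - (INR n * aa (s-1)%nat t + bb (s-1)%nat t))).
    set (eB := fun n => INR t * (M n s (t-1)%nat - (INR n * aa s (t-1)%nat + bb s (t-1)%nat))).
    set (eC := fun n => INR s * INR t * (M n (s-1)%nat (t-1)%nat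
                 - (INR n * aa (s-1)%nat (t-1)%nat + bb (s-1)%nat (t-1)%nat))).
    assert (LA : is_lim_seq eA 0).
    { unfold eA. destruct s as [|s'].
      - apply is_lim_seq_ext with (fun _ => 0); [|apply is_lim_seq_const].
        intros n. change (INR 0) with 0. ring.
      - apply L_scal0. replace (S s' - 1)%nat with s' by lia. apply IH. lia. }
    assert (LB : is_lim_seq eB 0).
    { unfold eB. destruct t as [|t'].
      - apply is_lim_seq_ext with (fun _ => 0); [|apply is_lim_seq_const].
        intros n. change (INR 0) with 0. ring.
      - apply L_scal0. replace (S t' - 1)%nat with t' by lia. apply IH. lia. }
    assert (LC : is_lim_seq eC 0).
    { unfold eC. destruct s as [|s'].
      - apply is_lim_seq_ext with (fun _ => 0); [|apply is_lim_seq_const].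
        intros n. change (INR 0) with 0. ring.
      - destruct t as [|t'].
        + apply is_lim_seq_ext with (fun _ => 0); [|apply is_lim_seq_const].
          intros n. change (INR 0) with 0. ring.
        + apply L_scal0. replace (S t' - 1)%nat with t' by lia.
          replace (S s' - 1)%nat with s' by lia. apply IH. lia. }
    assert (Hpos : 0 < INR s + INR t).
    { rewrite <- plus_INR. apply lt_0_INR. lia. }
    set (cst := INR s * INR t * (bb (s-1)%nat (t-1)%nat - bb (s-1)%nat t - bb s (t-1)%nat)
                + bb s t * (INR s * INR t)).
    apply is_lim_seq_ext_loc with
      (fun n => ((1 - INR t * / INR n) * eA n + (1 - INR s * / INR n) * eB n
                 + eC n * / INR n + cst * / INR n)
                * / ((INR s + INR t) - INR s * INR t * / INR n)).
    + exists (S (s + t)). intros n Hn.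
      assert (Hnz : (s + t <> 0)%nat) by lia.
      pose proof (proj2 HM n s t ltac:(lia) ltac:(lia) ltac:(lia) Hnz) as E.
      cbv zeta in E.
      unfold eA, eB, eC, cst.
      apply key.
      * apply lt_0_INR. lia.
      * split; [apply pos_INR | apply le_INR; lia].
      * split; [apply pos_INR | apply le_INR; lia].
      * exact Hpos.
      * apply Ha. exact Hnz.
      * apply Hb. exact Hnz.
      * exact E.
    + apply (L_mul0' _ _ (/ (INR s + INR t))); [| apply L_d; lra].
      repeat apply L_add0.
      * apply (L_mul0 _ _ 1); [|exact LA]. eapply lim_eq. apply L_lin. ring.
      * apply (L_mul0 _ _ 1); [|exact LB]. eapply lim_eq. apply L_lin. ring.
      * apply (L_mul0' _ _ 0); [exact LC | apply lim_inv_n].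
      * apply L_cinv.
Qed.

Theorem mainTheorem1 :
  forall (s t : nat) (M : nat -> nat -> nat -> R),
    coupon_rec M ->
    is_lim_seq (fun n : nat => M n s t - approx n s t) 0.
Proof.
  intros s t M HM.
  apply is_lim_seq_ext with (fun n => M n s t - (INR n * aa s t + bb s t)).
  - intros n. rewrite approx_eq. reflexivity.
  - apply (main_ind M HM (s + t)). lia.
Qed.
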